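(* Let $X$ be a topological space possessing an infinite metrizable gauge, let $\kappa$ be a regular cardinal with $\kappa\in\mathrm{MG}(X)$, and let $G\in\mathcal{G}_\kappa$. If $X$ is finally $\kappa$-compact, then $(X,d)$ is complete for every $d\in\mathrm{Met}(X;G)$.
   Context: A linearly ordered Abelian group is an Abelian group with a linear order compatible with addition. For $x,y\in G_{>0}$, $x\asymp y$ iff $y\le nx$ and $x\le my$ for some $n,m\in\mathbb{Z}_{\ge1}$; $\mathrm{Arc}(G)=G_{>0}/\asymp$, ordered by $[x]\preceq[y]$ iff ($nx<y$ for all $n$) or $x\asymp y$; $\mathrm{Arc}(G)^\perp$ is $\mathrm{Arc}(G)$ with a new least element adjoined. For a bottomed linearly ordered set $S$ (least element $\perp_S$, $S^*=S\setminus\{\perp_S\}$), $\chi(S)$ is the least cardinal $\kappa>0$ such that some strictly decreasing family $(s_\alpha)_{\alpha<\kappa}$ in $S^*$ has every $t\in S^*$ bounded below by some $s_\alpha$. A $G$-metric: $d\colon X^2\to G$, $d(x,y)=0\iff x=y$, $d\ge0$, symmetric, triangle inequality; $\mathrm{Met}(X;G)$ is the set of $G$-metrics generating the topology of $X$ via open balls of radii in $G_{>0}$. $\mathrm{MG}(X)$: cardinals $\kappa$ with some $G$, $\chi(\mathrm{Arc}(G)^\perp)=\kappa$, $\mathrm{Met}(X;G)\ne\emptyset$; infinite metrizable gauge: some $\kappa\in\mathrm{MG}(X)$ with $\kappa\ge\omega_0$. $\mathcal{G}_\kappa$: groups with $\chi(\mathrm{Arc}(G)^\perp)=\kappa$.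 A filter $\mathcal F$ is Cauchy for $d$ if for every $\epsilon\in G_{>0}$ some $F\in\mathcal F$ has $d(x,y)<\epsilon$ for all $x,y\in F$; $(X,d)$ is complete if every Cauchy filter converges. $X$ is finally $\kappa$-compact if every open cover has a subcover of cardinality $<\kappa$. *)

(* Defs.v *)
From HB Require Import structures.
From mathcomp Require Import all_boot all_order all_algebra.
From mathcomp Require Import boolp classical_sets functions filter topology.

Set Implicit Arguments.
Unset Strict Implicit.
Unset Printing Implicit Defensive.

Import GRing.Theory.
Local Open Scope classical_set_scope.
Local Open Scope ring_scope.

Definition card_le (A B : Type) : Prop := exists f : A -> B, injective f.
Definition card_lt (A B : Type) : Prop := card_le A B /\ ~ card_le B A.

(* Strict well-orders, and cardinals represented as initial ordinals:
   a well-ordered type K such that every proper initial segment has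
   cardinality strictly smaller than K.                                *)
Definition is_wellorder (K : Type) (lt : K -> K -> Prop) : Prop :=
  [/\ (forall x, ~ lt x x),
      (forall x y z, lt x y -> lt y z -> lt x z),
      (forall x y, x = y \/ lt x y \/ lt y x) &
      well_founded lt].

Definition is_cardinal (K : Type) (lt : K -> K -> Prop) : Prop :=
  is_wellorder lt /\ forall k : K, ~ card_le K {j : K | lt j k}.

Definition infinite_card (K : Type) : Prop := card_le nat K.

Definition regular_card (K : Type) (lt : K -> K -> Prop) : Prop :=
  infinite_card K /\
  forall A : set K, card_lt {x : K | A x} K ->
    exists k : K, forall a, A a -> lt a k.

Definition is_loag (G : zmodType) (le : rel G) : Prop :=
  [/\ (forall x, le x x),
      (forall x y, le x y -> le y x -> x = y),
      (forall x y z, le x y -> le y z -> le x z),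
      (forall x y, le x y \/ le y x) &
      (forall x y z, le x y -> le (x + z) (y + z))].

Definition glt (G : zmodType) (le : rel G) (x y : G) : Prop := le x y /\ x <> y.

Definition asymp (G : zmodType) (le : rel G) (x y : G) : Prop :=
  exists n m : nat, le y (x *+ n.+1) /\ le x (y *+ m.+1).

(* the order of Arc(G), on representatives: [x] ⪯ [y] *)
Definition arc_le (G : zmodType) (le : rel G) (x y : G) : Prop :=
  (forall n : nat, glt le (x *+ n.+1) y) \/ asymp le x y.

(* chi(S) for a bottomed linear order S, given by S^* = the set of T's
   elements satisfying P, linearly preordered by sle (the linear order
   of S^* is the quotient by sle /\ its converse).                     *)
Definition sstrict (T : Type) (sle : T -> T -> Prop) (x y : T) : Prop :=
  sle x y /\ ~ sle y x.

Definition coinitial_family (T : Type) (P : T -> Prop) (sle : T -> T -> Prop)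
    (K : Type) (ltK : K -> K -> Prop) : Prop :=
  exists s : K -> T,
    [/\ (forall a, P (s a)),
        (forall a b, ltK a b -> sstrict sle (s b) (s a)) &
        (forall t, P t -> exists a, sle (s a) t)].

Definition chi_is (T : Type) (P : T -> Prop) (sle : T -> T -> Prop)
    (K : Type) (ltK : K -> K -> Prop) : Prop :=
  [/\ inhabited K,
      coinitial_family P sle ltK &
      forall (L : Type) (ltL : L -> L -> Prop),
        is_cardinal ltL -> inhabited L -> card_lt L K ->
        ~ coinitial_family P sle ltL].

(* chi(Arc(G)^perp) = kappa; note (Arc(G)^perp)^* = Arc(G) *)
Definition chi_Arc_is (G : zmodType) (le : rel G)
    (K : Type) (ltK : K -> K -> Prop) : Prop :=
  chi_is (fun x : G => glt le 0 x) (arc_le le) ltK.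

Definition is_Gmetric (X : Type) (G : zmodType) (le : rel G)
    (d : X -> X -> G) : Prop :=
  [/\ (forall x y, d x y = 0 <-> x = y),
      (forall x y, le 0 (d x y)),
      (forall x y, d x y = d y x) &
      (forall x y z, le (d x z) (d x y + d y z))].

Definition gball (X : Type) (G : zmodType) (le : rel G)
    (d : X -> X -> G) (x : X) (e : G) : set X :=
  [set y | glt le (d x y) e].

Definition in_Met (X : topologicalType) (G : zmodType) (le : rel G)
    (d : X -> X -> G) : Prop :=
  is_Gmetric le d /\
  forall U : set X, open U <->
    (forall x, U x -> exists e, glt le 0 e /\ gball le d x e `<=` U).

Definition in_MG (X : topologicalType) (K : Type) (ltK : K -> K -> Prop) : Prop :=
  exists (G : zmodType) (le : rel G),
    [/\ is_loag le, chi_Arc_is le ltK & exists d : X -> X -> G, in_Met le d].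

Definition has_infinite_metrizable_gauge (X : topologicalType) : Prop :=
  exists (L : Type) (ltL : L -> L -> Prop),
    [/\ is_cardinal ltL, infinite_card L & in_MG X ltL].

Definition gcauchy (X : Type) (G : zmodType) (le : rel G)
    (d : X -> X -> G) (F : set_system X) : Prop :=
  forall e : G, glt le 0 e ->
    exists A, F A /\ forall x y, A x -> A y -> glt le (d x y) e.

Definition gcomplete (X : topologicalType) (G : zmodType) (le : rel G)
    (d : X -> X -> G) : Prop :=
  forall F : set_system X, ProperFilter F -> gcauchy le d F ->
    exists x : X, F --> x.

Definition finally_compact (X : topologicalType) (K : Type) : Prop :=
  forall C : set (set X),
    (forall A, C A -> open A) -> \bigcup_(A in C) A = setT ->
    exists D : set (set X),
      [/\ D `<=` C, card_lt {A : set X | D A} K & \bigcup_(A in D) A = setT].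

(* Main.v *)
Require Import Defs.
From HB Require Import structures.
From mathcomp Require Import all_boot all_order all_algebra.
From mathcomp Require Import boolp classical_sets functions filter topology.

Set Implicit Arguments.
Unset Strict Implicit.
Import GRing.Theory.
Local Open Scope classical_set_scope.
Local Open Scope ring_scope.

Section Loag.
Variables (G : zmodType) (le : rel G).
Hypothesis HG : is_loag le.

Lemma le_refl x : le x x.
Proof. by case: HG. Qed.
Lemma le_anti x y : le x y -> le y x -> x = y.
Proof. by case: HG => _ h _ _ _; apply: h. Qed.
Lemma le_trans x y z : le x y -> le y z -> le x z.
Proof. by case: HG => _ _ h _ _; apply: h. Qed.
Lemma le_total x y : le x y \/ le y x.
Proof. by case: HG. Qed.
Lemma le_addr x y z : le x y -> le (x + z) (y + z).
Proof. by case: HG => _ _ _ _ h; apply: h. Qed.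
Lemma le_addl x y z : le x y -> le (z + x) (z + y).
Proof. by move=> h; rewrite ![z + _]addrC; apply: le_addr. Qed.

Lemma nglt x y : ~ glt le x y -> le y x.
Proof.
move=> h; case: (le_total y x) => // hxy.
case: (pselect (x = y)) => [->|ne]; first exact: le_refl.
by exfalso; apply: h.
Qed.

Lemma nle x y : ~ le x y -> glt le y x.
Proof.
move=> h; case: (le_total x y) => // hyx; split => // e.
by apply: h; rewrite e; apply: le_refl.
Qed.

Lemma glt_le_false x y : glt le x y -> le y x -> False.
Proof. by case=> h1 h2 h3; apply: h2; apply: le_anti. Qed.

Lemma glt_le_trans x y z : glt le x y -> le y z -> glt le x z.
Proof.
case=> h1 h2 h3; split; first exact: le_trans h1 h3.
by move=> e; subst z; apply: h2; apply: le_anti.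
Qed.

Lemma le_glt_trans x y z : le x y -> glt le y z -> glt le x z.
Proof.
move=> h1 [h2 h3]; split; first exact: le_trans h1 h2.
by move=> e; subst z; apply: h3; apply: le_anti.
Qed.

Lemma glt_addr x y z : glt le x y -> glt le (x + z) (y + z).
Proof. by case=> h1 h2; split; [apply: le_addr | move/addIr]. Qed.
Lemma glt_addl x y z : glt le x y -> glt le (z + x) (z + y).
Proof. by move=> h; rewrite ![z + _]addrC; apply: glt_addr. Qed.

Lemma glt_add x y u v : glt le x y -> glt le u v -> glt le (x + u) (y + v).
Proof.
move=> h1 h2; apply: (glt_le_trans (glt_addr u h1)).
by apply: le_addl; case: h2.
Qed.

Lemma le_muln x y n : le x y -> le (x *+ n) (y *+ n).
Proof.
move=> h; elim: n => [|n IH]; first by rewrite !mulr0n; apply: le_refl.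
rewrite !mulrS; apply: le_trans (le_addr _ h) _; exact: le_addl.
Qed.

Lemma arc_strict u v r :
  sstrict (arc_le le) u v -> arc_le le v r -> glt le u r.
Proof.
case=> [[huv|huv] hnvu]; last first.
  by exfalso; apply: hnvu; right; case: huv => n [m [h1 h2]]; exists m, n.
case=> [hvr|[n [m [h1 h2]]]].
  by apply: (glt_le_trans (huv 0%N)); case: (hvr 0%N); rewrite mulr1n.
apply: nle => hru.
have := le_muln m.+1 hru => h3.
exact: glt_le_false (huv m) (le_trans h2 h3).
Qed.

End Loag.

Lemma unit_cardinal : is_cardinal (fun _ _ : unit => False).
Proof.
split; first (rewrite /is_wellorder; split).
- by move=> x [].
- by move=> x y z [].
- by case; case; left.
- by move=> x; constructor => y [].
by move=> k [f _]; case: (f tt).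
Qed.

Lemma halving (G : zmodType) (le : rel G) (HG : is_loag le)
  (K : Type) (ltK : K -> K -> Prop) (Kinf : infinite_card K)
  (HGk : chi_Arc_is le ltK) (e : G) :
  glt le 0 e -> exists h, glt le 0 h /\ forall n, glt le (h *+ n.+1) e.
Proof.
move=> he; apply: contrapT => hno.
case: HGk => [[k0] _ hmin].
apply: (hmin unit (fun _ _ => False) unit_cardinal (inhabits tt)).
- split; first by exists (fun _ => k0) => -[] [].
  case: Kinf => f finj [g ginj].
  have : g (f 0%N) = g (f 1%N) by case: (g (f 0%N)); case: (g (f 1%N)).
  by move/ginj/finj.
exists (fun _ => e); split => //.
move=> t ht; exists tt.
have [n hn] : exists n, ~ glt le (t *+ n.+1) e.
  apply: contrapT => hh; apply: hno; exists t; split => // n.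
  by apply: contrapT => hh2; apply: hh; exists n.
have h1 := nglt HG hn.
rewrite /arc_le.
case: (pselect (exists m, le t (e *+ m.+1))) => [[m hm]|hm].
  by right; exists m, n.
left => m; apply: nle => // hh; apply: hm; exists m; done.
Qed.
Lemma sig_inj (T : Type) (P : T -> Prop) (a b : {x | P x}) :
  proj1_sig a = proj1_sig b -> a = b.
Proof.
case: a b => [a ha] [b hb] /= e; subst b.
by rewrite (Prop_irrelevance ha hb).
Qed.

Lemma glt_trans (G : zmodType) (le : rel G) (HG : is_loag le) x y z :
  glt le x y -> glt le y z -> glt le x z.
Proof. by move=> h1 [h2 _]; apply: glt_le_trans h1 h2. Qed.

Theorem lemma2p61 (X : topologicalType)
  (HX : has_infinite_metrizable_gauge X)
  (K : Type) (ltK : K -> K -> Prop)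
  (Hcard : is_cardinal ltK) (Hreg : regular_card ltK) (HMG : in_MG X ltK)
  (G : zmodType) (le : rel G) (HG : is_loag le) (HGk : chi_Arc_is le ltK) :
  finally_compact X K ->
  forall d : X -> X -> G, in_Met le d -> gcomplete le d.
Proof.
move=> Hfc d [Hd HMet] F PF Fc.
case: Hd => Hd0 Hdpos Hdsym Hdtri.
apply: contrapT => hnc.
have Kinf := Hreg.1.
have hx : forall x, exists h, glt le 0 h /\ ~ F (gball le d x (h + h)).
  move=> x.
  have nc : ~ (F --> x) by move=> c; apply: hnc; exists x.
  have [U [nU nFU]] : exists U, nbhs x U /\ ~ F U.
    apply: contrapT => hh; apply: nc => U nU; apply: contrapT => nFU.
    by apply: hh; exists U.
  move: nU; rewrite nbhsE => -[V [oV Vx] VU].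
  have [e [he eV]] := (HMet V).1 oV x Vx.
  have [h [hh hn]] := halving HG Kinf HGk he.
  exists h; split => // Fh; apply: nFU; apply: filterS Fh => y /= hy.
  apply: VU; apply: eV; rewrite /gball /=.
  by apply: (glt_trans HG hy); rewrite -mulr2n; apply: hn.
case: (choice hx) => h hP.
pose C := [set B | exists x, B = gball le d x (h x)].
have ball_open : forall x r, open (gball le d x r).
  move=> x r; apply/(HMet _).2 => y hy.
  exists (r - d x y); split.
    by have := glt_addr HG (- d x y) hy; rewrite subrr.
  move=> z hz; rewrite /gball /=.
  apply: (le_glt_trans HG (Hdtri x y z)).
  have := glt_addl HG (d x y) hz; rewrite addrCA subrr addr0.
  done.
have Copen : forall A, C A -> open A by move=> A [x ->]; apply: ball_open.
have Ccov : \bigcup_(A in C) A = setT.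
  rewrite predeqE => y; split => // _.
  exists (gball le d y (h y)); first by exists y.
  rewrite /gball /=; have -> : d y y = 0 by apply/Hd0.
  exact: (hP y).1.
have [D [DC Dcard Dcov]] := Hfc C Copen Ccov.
case: HGk => _ [s [sP sdec scoin]] _.
have hB : forall B : {A | D A}, exists p : X * K,
    proj1_sig B = gball le d p.1 (h p.1) /\ arc_le le (s p.2) (h p.1).
  move=> [B DB]; have [x ex] := DC B DB.
  have [a ha] := scoin (h x) (hP x).1.
  by exists (x, a); rewrite /= ex.
case: (choice hB) => p pP.
pose Aset := [set a | exists B, (p B).2 = a].
have Acard : card_lt {a | Aset a} K.
  split; first by exists (@proj1_sig _ _) => a1 a2; apply: sig_inj.
  move=> [f finj]; apply: Dcard.2.
  have pre : forall a : {a | Aset a}, exists B, (p B).2 = proj1_sig a.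
    by move=> [a [B hb]]; exists B.
  case: (choice pre) => q qP.
  exists (fun k => q (f k)) => k1 k2 e; apply: finj; apply: sig_inj.
  by rewrite -!qP e.
have [k hk] := Hreg.2 Aset Acard.
have heps : forall B, glt le (s k) (h (p B).1).
  move=> B; apply: (arc_strict HG (sdec _ _ (hk _ _)) (pP B).2).
  by exists B.
have [A [FA Adiam]] := Fc (s k) (sP k).
have [y Ay] := filter_ex FA.
have : (setT : set X) y by [].
rewrite -Dcov => -[B0 DB0 B0y].
pose B := exist _ B0 DB0 : {A | D A}.
have eB : B0 = gball le d (p B).1 (h (p B).1) := (pP B).1.
apply: (hP (p B).1).2; apply: filterS FA => z Az.
rewrite /gball /=.
apply: (le_glt_trans HG (Hdtri _ y _)).
apply: (glt_add HG).
  by move: B0y; rewrite eB.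
exact: (@glt_trans G le HG (d y z) (s k) (h (p B).1) (Adiam y z Ay Az) (heps B)).
Qed.
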